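(* Let $N,K\ge 1$, $\mathbf{g}\in\mathbb{C}^{N}$, $\mathbf{h}_{r,k}\in\mathbb{C}^{N}$, $h_{d,k}\in\mathbb{C}$ ($k=1,\dots,K$), with all entries of $\mathbf{g}$ and every $\mathbf{h}_{r,k}$ nonzero and every $h_{d,k}\ne0$. Let $\sigma^2,\sigma_r^2,P_r,T_{\max}>0$ and $E_k>0$. Put $\mathbf{q}_k=\mathrm{diag}(\mathbf{g}^H)\mathbf{h}_{r,k}$, $\mathbf{G}=\mathrm{diag}(|[\mathbf{g}]_1|^2,\dots,|[\mathbf{g}]_N|^2)$, $\mathbf{H}_{r,k}=\mathrm{diag}(|[\mathbf{h}_{r,k}]_1|^2,\dots,|[\mathbf{h}_{r,k}]_N|^2)$. Consider $$\max_{\tau,\{p_k\},\mathbf{v}}\ \tau\log_2\!\Big(1+\frac{\sum_{k=1}^K p_k|h_{d,k}+\mathbf{v}^H\mathbf{q}_k|^2}{\sigma^2+\sigma_r^2\mathbf{v}^H\mathbf{G}\mathbf{v}}\Big)$$ over $\tau\in\mathbb{R}$, $p_k\in\mathbb{R}$, $\mathbf{v}\in\mathbb{C}^N$, subject to $\tau p_k\le E_k$ for all $k$; $\tau\le T_{\max}$; $\tau\ge0$, $p_k\ge 0$ for all $k$; and $\sum_{k=1}^K p_k\mathbf{v}^H\mathbf{H}_{r,k}\mathbf{v}+\sigma_r^2\|\mathbf{v}\|^2\le P_r$. Then at any optimal solution, $\tau=T_{\max}$.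
   Context: This is the sum-throughput maximization for active-IRS-aided NOMA uplink: all devices transmit simultaneously for time $\tau$ with powers $p_k$ and energies $E_k$, sharing one IRS reflection/amplification vector $\mathbf{v}$; $P_r$ is the IRS amplification power budget. *)

(* Defs.v *)
From HB Require Import structures.
From mathcomp Require Import all_boot all_order all_algebra.
From mathcomp Require Import reals exp.
From mathcomp Require Import complex.
Set Implicit Arguments. Unset Strict Implicit. Unset Printing Implicit Defensive.
Import Order.TTheory GRing.Theory Num.Theory.
Local Open Scope ring_scope.
Local Open Scope complex_scope.

Section Defs.
Variable R : realType.

Definition sqmod (z : R[i]) : R := (complex.Re z) ^+ 2 + (complex.Im z) ^+ 2.

Definition log2 (x : R) : R := ln x / ln 2.

Variables (N K : nat).

Definition hdot (a b : 'I_N -> R[i]) : R[i] := \sum_(i < N) (a i)^* * b i.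

Definition qvec (g hr : 'I_N -> R[i]) : 'I_N -> R[i] := fun i => (g i)^* * hr i.

(* v^H diag(|w_1|^2,...,|w_N|^2) v *)
Definition wquad (w v : 'I_N -> R[i]) : R := \sum_(i < N) sqmod (w i) * sqmod (v i).

Definition sqnorm (v : 'I_N -> R[i]) : R := \sum_(i < N) sqmod (v i).

Variables (g : 'I_N -> R[i]) (hr : 'I_K -> 'I_N -> R[i]) (hd : 'I_K -> R[i])
          (sigma2 sigmar2 Pr Tmax : R) (E : 'I_K -> R).

Definition objective (tau : R) (p : 'I_K -> R) (v : 'I_N -> R[i]) : R :=
  tau * log2 (1 + (\sum_(k < K) p k * sqmod (hd k + hdot v (qvec g (hr k))))
                  / (sigma2 + sigmar2 * wquad g v)).

Definition feasible (tau : R) (p : 'I_K -> R) (v : 'I_N -> R[i]) : Prop :=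
  [/\ forall k, tau * p k <= E k,
      tau <= Tmax,
      0 <= tau,
      forall k, 0 <= p k &
      \sum_(k < K) p k * wquad (hr k) v + sigmar2 * sqnorm v <= Pr].

Definition optimal (tau : R) (p : 'I_K -> R) (v : 'I_N -> R[i]) : Prop :=
  feasible tau p v /\
  forall tau' p' v', feasible tau' p' v' -> objective tau' p' v' <= objective tau p v.

End Defs.

(* Main.v *)
Require Import Defs.
From HB Require Import structures.
From mathcomp Require Import all_boot all_order all_algebra.
From mathcomp Require Import reals exp sequences.
From mathcomp Require Import complex ring lra.
Import Order.TTheory GRing.Theory Num.Theory.
Local Open Scope ring_scope.
Local Open Scope complex_scope.

Lemma ln_lt_sub1 {R : realType} (y : R) : 0 < y -> y != 1 -> ln y < y - 1.
Proof.
move=> y0 y1.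
have h : 1 + (y - 1) < expR (y - 1) by apply: expR_gt1Dx; rewrite subr_eq0.
rewrite -[ln y]/(ln y) -(expRK (y - 1)) ltr_ln ?posrE ?expR_gt0 //.
by move: h; rewrite addrC subrK.
Qed.

Lemma ln_ge_1sub {R : realType} (y : R) : 0 < y -> 1 - y^-1 <= ln y.
Proof.
move=> y0.
have H : -1 < y^-1 - 1 by have := invr_gt0 y; rewrite y0 => hy; lra.
have := le_ln1Dx H.
rewrite addrC subrK lnV ?posrE // lerNl opprB. done.
Qed.

Lemma key {R : realType} (a x : R) : 0 < a -> a < 1 -> 0 < x ->
  a * ln (1 + x) < ln (1 + a * x).
Proof.
move=> a0 a1 x0.
have u0 : 0 < 1 + a * x by rewrite addr_gt0 // mulr_gt0.
have x1 : 0 < 1 + x by rewrite addr_gt0.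
set w := (1 + x) / (1 + a * x).
have w0 : 0 < w by rewrite divr_gt0.
have w1 : w != 1.
  rewrite /w; apply/eqP => /(congr1 (fun t => t * (1 + a * x))).
  rewrite divfK ?gt_eqF // mul1r => hx.
  have : a * x < x by rewrite gtr_pMl.
  lra.
have e : ln (1 + x) = ln w + ln (1 + a * x).
  by rewrite -lnM ?posrE // /w divfK ?gt_eqF.
have h1 := @ln_lt_sub1 R w w0 w1.
have h2 := @ln_ge_1sub R _ u0.
have ew : w - 1 = (1 - a) * x / (1 + a * x).
  by rewrite /w; field; rewrite gt_eqF.
have eu : 1 - (1 + a * x)^-1 = a * x / (1 + a * x).
  by field; rewrite gt_eqF.
rewrite ew in h1; rewrite eu in h2.
rewrite e mulrDr.
have : a * ln w < a * ((1 - a) * x / (1 + a * x)) by rewrite ltr_pM2l.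
have : (1 - a) * (a * x / (1 + a * x)) <= (1 - a) * ln (1 + a * x).
  by rewrite ler_pM2l // subr_gt0.
move=> H1 H2.
have E1 : a * ((1 - a) * x / (1 + a * x)) = (1 - a) * (a * x / (1 + a * x)).
  by rewrite !mulrA [a * (1 - a)]mulrC -!mulrA.
rewrite E1 in H2.
have := lt_le_trans H2 H1.
rewrite mulrBl mul1r ltrBrDl => H.
by rewrite addrC.
Qed.

Lemma sqmod_ge0 {R : realType} (z : R[i]) : 0 <= sqmod z.
Proof. by rewrite /sqmod addr_ge0 // sqr_ge0. Qed.

Lemma sqmod_gt0 {R : realType} (z : R[i]) : z != 0 -> 0 < sqmod z.
Proof.
case: z => a b nz; rewrite /sqmod /= lt_def addr_ge0 ?sqr_ge0 // andbT.
apply: contra nz; rewrite paddr_eq0 ?sqr_ge0 // !sqrf_eq0 => /andP[/eqP-> /eqP->].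
by [].
Qed.

Lemma sqmod0 {R : realType} : sqmod (0 : R[i]) = 0.
Proof. by rewrite /sqmod /= expr0n /= addr0. Qed.

Lemma wquad_ge0 {R : realType} N (w v : 'I_N -> R[i]) : 0 <= wquad w v.
Proof. by rewrite /wquad sumr_ge0 // => i _; rewrite mulr_ge0 ?sqmod_ge0. Qed.

Theorem lemma2 (R : realType) (N K : nat) (hN : (0 < N)%N) (hK : (0 < K)%N)
  (g : 'I_N -> R[i]) (hr : 'I_K -> 'I_N -> R[i]) (hd : 'I_K -> R[i])
  (hg : forall n, g n != 0) (hhr : forall k n, hr k n != 0)
  (hhd : forall k, hd k != 0)
  (sigma2 sigmar2 Pr Tmax : R) (E : 'I_K -> R)
  (hs : 0 < sigma2) (hsr : 0 < sigmar2) (hPr : 0 < Pr) (hT : 0 < Tmax)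
  (hE : forall k, 0 < E k)
  (tau : R) (p : 'I_K -> R) (v : 'I_N -> R[i]) :
  optimal g hr hd sigma2 sigmar2 Pr Tmax E tau p v -> tau = Tmax.
Proof.
move=> [[hEk hTm ht0 hp0 hpow] hopt].
have l2 : 0 < ln (2 : R) by rewrite ln_gt0 // ltr1n.
have feas0 : feasible hr sigmar2 Pr Tmax E Tmax
                 (fun k => E k / Tmax) (fun _ => 0).
  split => //.
  - by move=> k; rewrite mulrC divfK ?gt_eqF.
  - exact: ltW.
  - by move=> k; rewrite divr_ge0 // ltW ?hE.
  - have -> : sqnorm (fun _ : 'I_N => 0 : R[i]) = 0.
      by rewrite /sqnorm big1 // => i _; rewrite sqmod0.
    rewrite big1 ?add0r ?mulr0 ?ltW // => k _.
    by rewrite /wquad big1 ?mulr0 // => i _; rewrite sqmod0 mulr0.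
have obj0 : 0 < objective g hr hd sigma2 sigmar2 Tmax
                 (fun k => E k / Tmax) (fun _ => 0).
  rewrite /objective /log2 mulr_gt0 // divr_gt0 // ln_gt0 // ltrDl.
  have -> : wquad g (fun _ => 0) = 0.
    by rewrite /wquad big1 // => i _; rewrite sqmod0 mulr0.
  rewrite mulr0 addr0 divr_gt0 //.
  rewrite (bigD1 (Ordinal hK)) //=.
  have h1 : 0 < E (Ordinal hK) / Tmax *
     sqmod (hd (Ordinal hK) + hdot (fun _ => 0) (qvec g (hr (Ordinal hK)))).
    rewrite mulr_gt0 ?divr_gt0 // sqmod_gt0 //.
    have -> : hdot (fun _ => 0) (qvec g (hr (Ordinal hK))) = 0.
      by rewrite /hdot big1 // => i _; rewrite conjC0 mul0r.
    by rewrite addr0.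
  rewrite ltr_pwDl // sumr_ge0 // => k _.
  by rewrite mulr_ge0 ?sqmod_ge0 // divr_ge0 // ltW.
have hpos := lt_le_trans obj0 (hopt _ _ _ feas0).
move: hopt hpos; rewrite /objective /log2.
set D := sigma2 + sigmar2 * wquad g v.
have D0 : 0 < D by have h := mulr_ge0 (ltW hsr) (wquad_ge0 _ g v); rewrite /D; lra.
set S := \sum_(k < K) p k * sqmod (hd k + hdot v (qvec g (hr k))).
have S0 : 0 <= S by rewrite sumr_ge0 // => k _; rewrite mulr_ge0 ?sqmod_ge0.
move=> hopt hpos.
have tau0 : 0 < tau.
  rewrite lt_def ht0 andbT; apply/eqP => t0; move: hpos; rewrite t0 mul0r ltxx.
  by [].
have X0 : 0 < S / D.
  rewrite lt_def divr_ge0 ?(ltW D0) // andbT; apply/eqP => x0.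
  by move: hpos; rewrite x0 addr0 ln1 mul0r mulr0 ltxx.
apply/eqP; rewrite eq_le hTm /=; rewrite leNgt; apply/negP => ltT.
set a := tau / Tmax.
have a0 : 0 < a by rewrite divr_gt0.
have a1 : a < 1 by rewrite ltr_pdivrMr // mul1r.
have eTa : Tmax * a = tau by rewrite /a mulrC divfK ?gt_eqF.
have feas1 : feasible hr sigmar2 Pr Tmax E Tmax
                 (fun k => a * p k) v.
  split => //.
  - by move=> k; rewrite mulrA eTa.
  - exact: ltW.
  - by move=> k; rewrite mulr_ge0 // ltW.
  - apply: le_trans hpow; rewrite lerD2r ler_sum // => k _.
    rewrite -mulrA; have h := mulr_ge0 (hp0 k) (wquad_ge0 _ (hr k) v); nra.
have := hopt _ _ _ feas1.
have -> : \sum_(k < K) a * p k * sqmod (hd k + hdot v (qvec g (hr k))) = a * S.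
  by rewrite /S mulr_sumr; apply: eq_bigr => k _; rewrite mulrA.
move=> H.
have k1 := @key R a (S / D) a0 a1 X0.
rewrite -mulrA in H.
move: H; rewrite !mulrA ler_pM2r ?invr_gt0 // -eTa => H.
have k2 : Tmax * (a * ln (1 + S / D)) < Tmax * ln (1 + a * (S / D)) by rewrite ltr_pM2l.
rewrite -/D -mulrA -mulrA in H. have := lt_le_trans k2 H.
by rewrite !mulrA ltxx.
Qed.
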